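(* Let $G$ be a finitely generated group. Then every sequence of almost-invariant probability measures on $G$ measures index uniformly.
   Context: A sequence $(\mu_n)$ of probability measures on $G$ is almost-invariant if $\|x\cdot\mu_n-\mu_n\|_1\to0$ for every $x\in G$, where $x\cdot\mu(A)=\mu(x^{-1}A)$. It measures index uniformly if $\mu_n(xH)\to1/[G:H]$ uniformly over all $x\in G$ and all subgroups $H$ of $G$, with the convention $1/[G:H]=0$ when $H$ has infinite index. *)

(* Defs.v *)
From HB Require Import structures.
From mathcomp Require Import all_boot all_order all_algebra.
From mathcomp Require Import finmap.
From mathcomp Require Import all_classical all_reals all_analysis.

Set Implicit Arguments.
Unset Strict Implicit.
Unset Printing Implicit Defensive.

Import Order.TTheory GRing.Theory Num.Theory.
Local Open Scope classical_set_scope.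
Local Open Scope ring_scope.

Section GroupDefs.
Variable G : groupType.

Definition is_subgroup (H : set G) : Prop :=
  [/\ H (@monoid.one G),
      (forall x y, H x -> H y -> H (@monoid.mul G x y)) &
      (forall x, H x -> H (@monoid.inv G x))].

Definition finitely_generated : Prop :=
  exists S : seq G, forall H : set G, is_subgroup H ->
    (forall s, s \in S -> H s) -> H = setT.

Definition lcoset (x : G) (H : set G) : set G := [set @monoid.mul G x h | h in H].

Definition lcosets (H : set G) : set (set G) := [set lcoset x H | x in [set: G]].

(* 1/[G:H], with the convention 1/[G:H] = 0 when the index is infinite *)
Definition inv_index (R : realType) (H : set G) : R :=
  if pselect (finite_set (lcosets H)) then (#|` fset_set (lcosets H)|%:R)^-1
  else 0.

Definition is_prob (R : realType) (mu : G -> R) : Prop :=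
  (forall g, 0 <= mu g) /\ (\esum_(g in [set: G]) (mu g)%:E = 1)%E.

Definition pmeas (R : realType) (mu : G -> R) (A : set G) : \bar R :=
  (\esum_(g in A) (mu g)%:E)%E.

(* || x.mu - mu ||_1 where (x.mu)(A) = mu(x^{-1} A), i.e. (x.mu)(g) = mu(x^{-1} g) *)
Definition transl_dist (R : realType) (mu : G -> R) (x : G) : \bar R :=
  (\esum_(g in [set: G]) (`|mu (@monoid.mul G (@monoid.inv G x) g) - mu g|)%:E)%E.

Definition almost_invariant (R : realType) (mu : nat -> G -> R) : Prop :=
  forall x : G, transl_dist (mu n) x @[n --> \oo] --> 0%E.

Definition measures_index_uniformly (R : realType) (mu : nat -> G -> R) : Prop :=
  forall eps : R, 0 < eps -> exists N : nat, forall n : nat, (N <= n)%N ->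
    forall (x : G) (H : set G), is_subgroup H ->
      (`| pmeas (mu n) (lcoset x H) - (inv_index R H)%:E | < eps%:E)%E.

End GroupDefs.

(* Main.v *)
Set Warnings "-all".
Require Import Defs.
From HB Require Import structures.
From mathcomp Require Import all_boot all_order all_algebra.
From mathcomp Require Import all_classical all_reals all_analysis.
From mathcomp Require Import lra.
From mathcomp Require Import finmap.
From mathcomp Require Import finmap.
Set Implicit Arguments.
Unset Strict Implicit.
Unset Printing Implicit Defensive.
Import Order.TTheory GRing.Theory Num.Theory.
Local Open Scope classical_set_scope.
Local Open Scope ring_scope.
Section Grp.
Variable G : groupType.
Implicit Types (x y z t g : G) (H A : set G).

Lemma lcosetM x y A : lcoset x (lcoset y A) = lcoset (x * y)%g A.
Proof.
rewrite /lcoset; apply/seteqP; split => g /=.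
- by move=> [_ [h Ah <-] <-]; exists h => //; rewrite monoid.mulgA.
- by move=> [h Ah <-]; exists (y * h)%g; [exists h|rewrite monoid.mulgA].
Qed.

Lemma lcoset1 A : lcoset 1%g A = A.
Proof.
rewrite /lcoset; apply/seteqP; split => g /=.
- by move=> [h Ah <-]; rewrite monoid.mul1g.
- by move=> Ag; exists g => //; rewrite monoid.mul1g.
Qed.

Lemma lcoset_bij t A : set_bij A (lcoset t A) (monoid.mul t).
Proof.
split.
- by move=> g Ag /=; exists g.
- by move=> a b _ _ /= /monoid.mulgI.
- by move=> g [h Ah <-]; exists h.
Qed.

Lemma lcoset_self H y : is_subgroup H -> lcoset y H y.
Proof. by case=> H1 _ _; exists 1%g => //; rewrite monoid.mulg1. Qed.

Lemma lcoset_sub_eq H h : is_subgroup H -> H h -> lcoset h H = H.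
Proof.
case=> H1 HM HV Hh; rewrite /lcoset; apply/seteqP; split => g /=.
- by move=> [k Hk <-]; apply: HM.
- move=> Hg; exists ((h^-1) * g)%g; first exact: HM (HV _ Hh) Hg.
  by rewrite monoid.mulgA monoid.mulgV monoid.mul1g.
Qed.

Lemma lcoset_eq H y g : is_subgroup H -> lcoset y H g -> lcoset g H = lcoset y H.
Proof.
move=> sH [h Hh <-]; by rewrite -lcosetM (lcoset_sub_eq sH Hh).
Qed.

Lemma lcoset_disj H y z : is_subgroup H -> lcoset y H != lcoset z H ->
  lcoset y H `&` lcoset z H = set0.
Proof.
move=> sH neq; apply/seteqP; split => // g [/(lcoset_eq sH) e1 /(lcoset_eq sH) e2].
by move: neq; rewrite -e1 -e2 eqxx.
Qed.

Definition word (T : seq G) (ws : seq nat) : G :=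
  foldl (fun g i => (nth 1%g T i * g)%g) 1%g ws.

Lemma word_rcons T ws i : word T (rcons ws i) = (nth 1%g T i * word T ws)%g.
Proof. by rewrite /word foldl_rcons. Qed.

Lemma word_cat T l1 l2 : word T (l1 ++ l2) = (word T l2 * word T l1)%g.
Proof.
elim/last_ind: l2 => [|l2 i IH]; first by rewrite cats0 /= monoid.mul1g.
by rewrite -rcons_cat !word_rcons IH monoid.mulgA.
Qed.

Lemma word1 T j : word T [:: j] = nth 1%g T j.
Proof. by rewrite /word /= monoid.mulg1. Qed.

Lemma gen_words : finitely_generated G ->
  exists T : seq G, forall g, exists ws : seq nat,
    all (fun i => i < size T)%N ws /\ g = word T ws.
Proof.
case=> S hS; pose T := S ++ map (@monoid.inv G) S; exists T.
have Tinv i : (i < size T)%N -> exists2 j, (j < size T)%N & nth 1%g T j = ((nth 1%g T i)^-1)%g.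
  rewrite /T size_cat size_map => iT.
  case: (ltnP i (size S)) => iS.
  - exists (i + size S)%N; first by rewrite ltn_add2r.
    by rewrite nth_cat ltnNge leq_addl /= addnK (nth_map 1%g) // nth_cat iS.
  - have iS' : (i - size S < size S)%N by rewrite ltn_subLR.
    exists (i - size S)%N; first by rewrite ltn_addr.
    rewrite [in RHS]nth_cat ltnNge iS /= (nth_map 1%g) // monoid.invgK.
    by rewrite nth_cat iS'.
pose W := [set g : G | exists ws : seq nat, all (fun i => i < size T)%N ws /\ g = word T ws].
have sW : is_subgroup W.
  split.
  - by exists [::].
  - move=> x y [w1 [a1 ->]] [w2 [a2 ->]]; exists (w2 ++ w1).
    by rewrite all_cat a1 a2 word_cat.
  - move=> x [ws [aw ->]]; elim/last_ind: ws aw => [|ws i IH].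
      by move=> _; exists [::]; rewrite /word /= monoid.invg1.
    rewrite all_rcons => /andP[iT /IH [ws' [aw' e]]].
    have [j jT ej] := Tinv i iT.
    exists ([:: j] ++ ws'); rewrite all_cat /= jT aw'; split => //.
    by rewrite word_rcons monoid.invgM e -cat1s word_cat word1 ej.
suff WT : W = setT.
  by move=> g; have : W g by rewrite WT.
apply: hS => //.
move=> s sS; exists [:: index s S]; rewrite /= andbT; split.
    by rewrite /T size_cat ltn_addr // index_mem.
  by rewrite word1 /T nth_cat index_mem sS nth_index.
Qed.
End Grp.
Section Esum.
Variables (R : realType) (T : choiceType).
Implicit Types (A B : set T) (a : T -> \bar R).
Local Open Scope ereal_scope.

Lemma esum_setU_disj A B a : (forall x, 0 <= a x) -> A `&` B = set0 ->
  \esum_(i in A `|` B) a i = \esum_(i in A) a i + \esum_(i in B) a i.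
Proof.
move=> a0 AB; rewrite esum_mkcond (esum_mkcond A) (esum_mkcond B) -esumD; last 2 first.
- by move=> x _; case: ifP.
- by move=> x _; case: ifP.
apply: eq_esum => x _; rewrite in_setU.
case: (boolP (x \in A)) => xA; case: (boolP (x \in B)) => xB /=; rewrite ?adde0 ?add0e //.
have : (A `&` B) x by split; apply/set_mem.
by rewrite AB.
Qed.

Lemma esum_sub A B a : (forall x, 0 <= a x) -> A `<=` B ->
  \esum_(i in A) a i <= \esum_(i in B) a i.
Proof.
move=> a0 AB; rewrite esum_mkcond (esum_mkcond B); apply: le_esum => x _.
case: (boolP (x \in A)) => xA; case: (boolP (x \in B)) => xB //.
by move: xB; rewrite (mem_set (AB _ (set_mem xA))).
Qed.

Definition bigU (l : seq (set T)) : set T := \big[setU/set0]_(A <- l) A.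

Lemma bigUP l x : bigU l x <-> exists2 A, A \in l & A x.
Proof.
elim: l => [|A l IH]; rewrite /bigU ?big_nil ?big_cons.
  by split => // -[].
split.
- case=> [Ax|/IH [B Bl Bx]]; first by exists A; rewrite ?mem_head.
  by exists B; rewrite // in_cons Bl orbT.
- case=> B; rewrite in_cons => /orP[/eqP->|Bl Bx]; first by left.
  by right; apply/IH; exists B.
Qed.

Lemma esum_bigU l a : (forall x, 0 <= a x) -> uniq l ->
  (forall A B, A \in l -> B \in l -> A != B -> A `&` B = set0) ->
  \sum_(A <- l) \esum_(i in A) a i = \esum_(i in bigU l) a i.
Proof.
move=> a0; elim: l => [|A l IH] /=.
  by move=> _ _; rewrite big_nil /bigU big_nil esum_set0.
move=> /andP[Al ul] dl.
rewrite big_cons IH //; last first.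
  by move=> B C Bl Cl; apply: dl; rewrite in_cons ?Bl ?Cl orbT.
rewrite /bigU big_cons -/(bigU l) esum_setU_disj //.
apply/seteqP; split => // x [Ax /bigUP [B Bl Bx]].
have AB : A != B by apply: contraNneq Al => ->.
have Bl' : B \in A :: l by rewrite in_cons Bl orbT.
have := dl A B (mem_head _ _) Bl' AB.
by move/seteqP => [+ _] => /(_ x); apply.
Qed.
End Esum.
Section Meas.
Variables (R : realType) (G : groupType) (mu : G -> R).
Hypothesis mu0 : forall g, 0 <= mu g.
Hypothesis mu1 : (\esum_(g in [set: G]) (mu g)%:E = 1)%E.
Local Open Scope ereal_scope.

Definition fm (c : set G) : R := fine (pmeas mu c).

Lemma pmeas_transl t A : pmeas mu (lcoset t A) = \esum_(g in A) (mu (t * g)%g)%:E.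
Proof. by rewrite /pmeas (@reindex_esum _ _ _ _ _ _ (fun g => (mu g)%:E) (lcoset_bij t A)). Qed.

Lemma pmeas_ge0 A : 0 <= pmeas mu A.
Proof. by apply: esum_ge0 => g _; rewrite lee_fin. Qed.

Lemma pmeas_le1 A : pmeas mu A <= 1.
Proof. by rewrite -mu1; apply: esum_sub => // g; rewrite lee_fin. Qed.

Lemma pmeas_fin A : pmeas mu A \is a fin_num.
Proof.
by rewrite ge0_fin_numE ?pmeas_ge0 // (le_lt_trans (pmeas_le1 A)) ?ltey.
Qed.

Lemma step_bound t A :
  (`|fm (lcoset t A) - fm A|%R)%:E <= \esum_(g in A) (`|mu (t * g)%g - mu g|%R)%:E.
Proof.
set X := esum _ _.
have X0 : 0 <= X by apply: esum_ge0 => g _; rewrite lee_fin.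
have ha : pmeas mu (lcoset t A) <= pmeas mu A + X.
  rewrite pmeas_transl /pmeas /X -esumD; last 2 first.
  - by move=> g _; rewrite lee_fin.
  - by move=> g _; rewrite lee_fin.
  apply: le_esum => g _; rewrite -EFinD lee_fin.
  have := ler_norm (mu (t * g)%g - mu g); lra.
have hb : pmeas mu A <= pmeas mu (lcoset t A) + X.
  rewrite pmeas_transl /pmeas /X -esumD; last 2 first.
  - by move=> g _; rewrite lee_fin.
  - by move=> g _; rewrite lee_fin.
  apply: le_esum => g _; rewrite -EFinD lee_fin.
  have := ler_norm (mu g - mu (t * g)%g); rewrite (distrC (mu g)); lra.
rewrite /fm; move: ha hb.
rewrite -(fineK (pmeas_fin (lcoset t A))) -(fineK (pmeas_fin A)).
move: (fine _) (fine _) => a b.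
case: X X0 => [x| |] //= X0; last by move=> *; rewrite leey.
move=> ha hb; rewrite -EFinD lee_fin in ha; rewrite -EFinD lee_fin in hb.
rewrite lee_fin ler_norml; apply/andP; split; lra.
Qed.

Lemma sum_bound t H (l : seq (set G)) : is_subgroup H -> uniq l ->
  (forall c, c \in l -> lcosets H c) ->
  \sum_(c <- l) (`|fm (lcoset t c) - fm c|%R)%:E <= transl_dist mu (t^-1)%g.
Proof.
move=> sH ul lH.
apply: le_trans.
  apply: lee_sum => c _; exact: step_bound.
rewrite esum_bigU //; last first.
  move=> A B /lH [y _ <-] /lH [z _ <-]; exact: lcoset_disj.
rewrite /transl_dist monoid.invgK; apply: esum_sub => // g.
Qed.
End Meas.
Section Walk.
Variables (R : realType) (G : groupType) (f : set G -> R) (T : seq G).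

Definition tg i := nth 1%g T i.
Definition st (c0 : set G) (ws : seq nat) : set G :=
  foldl (fun c i => lcoset (tg i) c) c0 ws.
Definition wt (e : nat * set G) : R := `|f (lcoset (tg e.1) e.2) - f e.2|.
Definition edges c0 (ws : seq nat) : seq (nat * set G) :=
  [seq (nth 0%N ws j, st c0 (take j ws)) | j <- iota 0 (size ws)].

Lemma st_rcons c0 ws i : st c0 (rcons ws i) = lcoset (tg i) (st c0 ws).
Proof. by rewrite /st foldl_rcons. Qed.

Lemma mem_edges c0 ws e : e \in edges c0 ws <->
  exists j, (j < size ws)%N /\ e = (nth 0%N ws j, st c0 (take j ws)).
Proof.
split.
- by move=> /mapP [j]; rewrite mem_iota add0n => /andP[_ js] ->; exists j.
- by move=> [j [js ->]]; apply/mapP; exists j; rewrite // mem_iota add0n js.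
Qed.

Lemma edges_take c0 ws k : {subset edges c0 (take k ws) <= edges c0 ws}.
Proof.
move=> e /mem_edges [j [js ->]]; apply/mem_edges; exists j.
move: js; rewrite size_take_min leq_min => /andP[jk js]; split => //.
by rewrite nth_take // take_takel // ltnW.
Qed.

Lemma wt_ge0 e : 0 <= wt e. Proof. exact: normr_ge0. Qed.

Lemma walk_aux n : forall ws, (size ws <= n)%N -> forall c0 (E : seq (nat * set G)),
  uniq E -> {subset edges c0 ws <= E} ->
  `|f (st c0 ws) - f c0| <= \sum_(e <- E) wt e.
Proof.
elim: n => [|n IH] ws.
  rewrite leqn0 size_eq0 => /eqP -> c0 E _ _.
  by rewrite /st /= subrr normr0 sumr_ge0 // => e _; exact: wt_ge0.
case/lastP: ws => [|ws i].
  move=> _ c0 E _ _.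
  by rewrite /st /= subrr normr0 sumr_ge0 // => e _; exact: wt_ge0.
rewrite size_rcons ltnS => wsn c0 E uE sE.
pose e := (i, st c0 ws).
have tr : take (size ws) (rcons ws i) = ws by rewrite -cats1 take_size_cat.
have ein : e \in edges c0 (rcons ws i).
  apply/mem_edges; exists (size ws); rewrite size_rcons ltnSn; split => //.
  by rewrite nth_rcons ltnn eqxx tr.
have sub1 : {subset edges c0 ws <= edges c0 (rcons ws i)}.
  by move=> x; rewrite -{1}tr; exact: edges_take.
case: (boolP (e \in edges c0 ws)) => ews.
  move/mem_edges: ews => [j [js [ej stj]]].
  have -> : st c0 (rcons ws i) = st c0 (take j.+1 ws).
    by rewrite st_rcons (take_nth 0%N js) st_rcons -ej -stj.
  apply: IH => //.
    by rewrite size_take_min geq_min (leq_trans js wsn).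
  by move=> x /edges_take /sub1 /sE.
have eE : e \in E by apply: sE.
rewrite (perm_big _ (perm_to_rem eE)) big_cons.
apply: le_trans (ler_distD (f (st c0 ws)) _ _) _.
rewrite st_rcons lerD //.
apply: IH => //; first exact: rem_uniq.
move=> x xe; rewrite (mem_rem_uniq _ uE) inE (sE x (sub1 x xe)) andbT.
by apply: contraNneq ews => <-.
Qed.

Lemma walk c0 ws : `|f (st c0 ws) - f c0| <= \sum_(e <- undup (edges c0 ws)) wt e.
Proof.
apply: (@walk_aux (size ws)) => //; first exact: undup_uniq.
by move=> x; rewrite mem_undup.
Qed.

End Walk.
Section Key.
Variables (R : realType) (G : groupType) (mu : G -> R).
Hypothesis mu0 : forall g, 0 <= mu g.
Hypothesis mu1 : (\esum_(g in [set: G]) (mu g)%:E = 1)%E.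
Variable T : seq G.
Hypothesis hT : forall g, exists ws : seq nat,
    all (fun i => i < size T)%N ws /\ g = word T ws.
Local Open Scope ereal_scope.

Lemma st_coset y H ws : st T (lcoset y H) ws = lcoset (word T ws * y)%g H.
Proof.
elim/last_ind: ws => [|ws i IH]; first by rewrite /st /= /word /= monoid.mul1g.
by rewrite st_rcons IH lcosetM word_rcons monoid.mulgA.
Qed.

Lemma key H y z : is_subgroup H ->
  (`|fm mu (lcoset y H) - fm mu (lcoset z H)|%R)%:E <=
  \sum_(i <- iota 0 (size T)) transl_dist mu ((tg T i)^-1)%g.
Proof.
move=> sH.
have [ws [aws ews]] := hT (z * y^-1)%g.
have stz : st T (lcoset y H) ws = lcoset z H.
  by rewrite st_coset -ews -monoid.mulgA monoid.mulVg monoid.mulg1.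
have := walk (fm mu) T (lcoset y H) ws; rewrite stz distrC.
set E := undup _ => hw.
apply: (@le_trans _ _ ((\sum_(e <- E) wt (fm mu) T e)%R)%:E); first by rewrite lee_fin.
have Efst : forall e, e \in E -> (e.1 < size T)%N /\ lcosets H e.2.
  move=> e; rewrite mem_undup => /mem_edges [j [js ->]] /=; split.
    by move/allP: aws; apply; exact: mem_nth.
  by rewrite st_coset; exists (word T (take j ws) * y)%g.
rewrite -sumEFin.
have -> : \sum_(e <- E) (wt (fm mu) T e)%:E =
    \sum_(e <- E) \sum_(i <- iota 0 (size T)) (if e.1 == i then (wt (fm mu) T e)%:E else 0).
  apply: eq_big_seq => e eE.
  have eT : e.1 \in iota 0 (size T) by rewrite mem_iota add0n; case: (Efst e eE).
  rewrite (bigD1_seq e.1 eT (iota_uniq _ _)) /= eqxx big1 /= ?adde0 //.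
  by move=> i /negPf; rewrite eq_sym => ->.
rewrite exchange_big; apply: lee_sum => i _.
rewrite -big_mkcond.
have -> : \sum_(e <- E | e.1 == i) (wt (fm mu) T e)%:E =
    \sum_(c <- [seq e.2 | e <- E & e.1 == i]) (`|fm mu (lcoset (tg T i) c) - fm mu c|%R)%:E.
  rewrite big_map big_filter; apply: eq_bigr => e /eqP <-.
  by case: e.
apply: (@sum_bound _ _ mu mu0 mu1 _ H) => //.
- rewrite map_inj_in_uniq ?filter_uniq ?undup_uniq //.
  move=> [a c] [b d]; rewrite !mem_filter /= => /andP[/eqP -> _] /andP[/eqP -> _].
  by move=> ->.
- move=> c /mapP [e]; rewrite mem_filter => /andP[_ eE] ->.
  by case: (Efst e eE).
Qed.
End Key.
Section Fin.
Variables (R : realType) (G : groupType) (mu : G -> R).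
Hypothesis mu0 : forall g, 0 <= mu g.
Hypothesis mu1 : (\esum_(g in [set: G]) (mu g)%:E = 1)%E.

Lemma sum_fm H l : is_subgroup H -> uniq l -> (forall c, c \in l -> lcosets H c) ->
  (\sum_(c <- l) fm mu c)%:E = pmeas mu (bigU l).
Proof.
move=> sH ul lH; rewrite -sumEFin.
rewrite (eq_bigr (fun c => pmeas mu c)); last first.
  by move=> c _; rewrite /fm fineK // (pmeas_fin mu0 mu1).
rewrite /pmeas esum_bigU //.
move=> A B /lH [y _ <-] /lH [z _ <-]; exact: lcoset_disj.
Qed.

Lemma sum_fm_le1 H l : is_subgroup H -> uniq l -> (forall c, c \in l -> lcosets H c) ->
  \sum_(c <- l) fm mu c <= 1.
Proof.
move=> sH ul lH; rewrite -lee_fin (sum_fm sH ul lH); exact: pmeas_le1.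
Qed.
End Fin.

Lemma sum_const_seq (R : realType) (A : Type) (l : seq A) (a : R) :
  \sum_(c <- l) a = (size l)%:R * a.
Proof.
elim: l => [|c l IH]; first by rewrite big_nil mul0r.
by rewrite big_cons IH /= -add1n natrD mulrDl mul1r.
Qed.

Lemma transl_ge0 (R : realType) (G : groupType) (mu : G -> R) x :
  (0 <= transl_dist mu x)%E.
Proof. by apply: esum_ge0 => g _; exact: normr_ge0. Qed.


Unset Implicit Arguments.
Theorem theorem1p13 (R : realType) (G : groupType) (mu : nat -> G -> R) :
  finitely_generated G ->
  (forall n, is_prob (mu n)) ->
  almost_invariant mu ->
  measures_index_uniformly mu.
Proof.
move=> hfg hprob hai eps eps0.
have [T hT] := gen_words hfg.
pose D n := (\sum_(i <- iota 0 (size T)) transl_dist (mu n) ((tg T i)^-1)%g)%E.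
have D0 n : (0 <= D n)%E.
  by apply: sume_ge0 => i _; exact: transl_ge0.
have Dcvg : D n @[n --> \oo] --> 0%E.
  have := @cvg_nnesum nat \oo _ R nat (iota 0 (size T))
    (fun i n => transl_dist (mu n) ((tg T i)^-1)%g) (fun _ => 0%E) xpredT.
  rewrite big1 //; apply.
  - by move=> i _; apply: nearW => n; exact: transl_ge0.
  - by move=> i _; exact: hai.
have e2 : 0 < eps / 2 by rewrite divr_gt0.
have : \forall n \near \oo, (D n < (eps / 2)%:E)%E.
  have hn : \forall y \near (0%R)%:E, (y < (eps/2)%:E)%E.
    by apply/nbhs_EFin; exact: lt_nbhsl.
  exact: Dcvg hn.
case=> N _ HN; exists N => n Nn x H sH.
have [mu0 mu1] := hprob n.
have Dn := HN n Nn.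
have [d Dd] : exists d, D n = d%:E.
  exists (fine (D n)); rewrite fineK // ge0_fin_numE // (lt_trans Dn) ?ltey //.
rewrite Dd lte_fin in Dn.
have d0 : 0 <= d by rewrite -lee_fin -Dd.
have kb y z : `|fm (mu n) (lcoset y H) - fm (mu n) (lcoset z H)| <= d.
  by rewrite -lee_fin -Dd; apply: key.
have lcsP z : lcosets H (lcoset z H) by exists z.
rewrite -(fineK (pmeas_fin mu0 mu1 (lcoset x H))) -/(fm (mu n) (lcoset x H)).
set a := fm (mu n) (lcoset x H).
have a0 : 0 <= a by apply: fine_ge0; exact: pmeas_ge0.
rewrite /inv_index; case: pselect => fin /=.
- set l := finmap.enum_fset (fset_set (lcosets H)).
  have ul : uniq l by exact: fset_uniq.
  have inl c : (c \in l) = (c \in lcosets H).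
    by rewrite -(in_fset_set fin).
  have lH c : c \in l -> lcosets H c by rewrite inl => /set_mem.
  have cover : bigU l = setT.
    apply/seteqP; split => // g _; apply/bigUP; exists (lcoset g H).
      by rewrite inl; apply/mem_set.
    exact: lcoset_self.
  have s1 : \sum_(c <- l) fm (mu n) c = 1.
    apply: EFin_inj; rewrite (sum_fm mu0 mu1 sH ul lH) cover; exact: mu1.
  have lo : \sum_(c <- l) (a - d) <= \sum_(c <- l) fm (mu n) c.
    rewrite big_seq [leRHS]big_seq; apply: ler_sum => c /lH [z _ <-]; have := kb x z; rewrite ler_norml => /andP[h1 h2].
    rewrite /a; lra.
  have hi : \sum_(c <- l) fm (mu n) c <= \sum_(c <- l) (a + d).
    rewrite big_seq [leRHS]big_seq; apply: ler_sum => c /lH [z _ <-]; have := kb x z; rewrite ler_norml => /andP[h1 h2].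
    rewrite /a; lra.
  rewrite s1 !sum_const_seq in lo hi.
  have xl : lcoset x H \in l by rewrite inl; apply/mem_set.
  have kpos : (0 < size l)%N.
    by rewrite lt0n; apply/negP => /eqP/size0nil l0; rewrite l0 in xl.
  set k := (size l)%:R in lo hi *.
  have k0 : 0 < k by rewrite ltr0n.
  have kq : k * k^-1 = 1 by rewrite mulfV // gt_eqF.
  have q0 : 0 < k^-1 by rewrite invr_gt0.
  move: (k^-1) kq q0 => q kq q0.
  rewrite lte_fin.
  have h1 : a - d <= q by nra.
  have h2 : q <= a + d by nra.
  rewrite ltr_norml; apply/andP; split; lra.
- rewrite lte_fin subr0 ger0_norm //.
  have r0 : 0 <= 2 / eps by rewrite divr_ge0 // ltW.
  have reps : 2 / eps * eps = 2 by rewrite mulfVK // gt_eqF.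
  have rK := archi_boundP r0.
  move: (2 / eps) r0 reps rK => r r0 reps rK.
  set K := Num.bound r in rK.
  have [B BH BK] := infinite_set_fset K fin.
  set l := finmap.enum_fset B.
  have ul : uniq l by exact: fset_uniq.
  have lH c : c \in l -> lcosets H c by move=> cl; apply: BH.
  have [c [cl hc]] : exists c, c \in l /\ fm (mu n) c < eps / 2.
    case: (pselect (exists c, c \in l /\ fm (mu n) c < eps / 2)) => // nex.
    exfalso.
    have lo : \sum_(c <- l) (eps / 2) <= \sum_(c <- l) fm (mu n) c.
      rewrite big_seq [leRHS]big_seq; apply: ler_sum => c cl.
      rewrite leNgt; apply/negP => hc; apply: nex; exists c; split => //.
    have := sum_fm_le1 mu0 mu1 sH ul lH.
    rewrite sum_const_seq in lo.
    have : K%:R <= (size l)%:R :> R by rewrite ler_nat.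
    move: (K%:R) rK (size l)%:R lo => k rK s lo ks hle.
    have : s * (eps / 2) <= 1 by lra.
    nra.
  have [z _ ez] := lH c cl.
  have := kb x z; rewrite ez ler_norml => /andP[h1 h2].
  rewrite /a; lra.
Qed.
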